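(* Let $d\ge2$ be an integer, $p\in(0,1]$, $\lambda\in(0,1)$, $b=1-(1-p)\lambda$, and let $\bar F$ be the solution of $\bar F'(w)=\lambda(p\bar F(w)^d+(1-p)\bar F(w))-\bar F(w)$, $\bar F(0)=\lambda$. Then $$\int_0^\infty\bar F(w)\,dw=\frac{\lambda}{b}\sum_{n=0}^\infty\frac1{1+n(d-1)}\left(\frac{p\lambda^d}{b}\right)^n.$$ In particular, for $d=2$, $\int_0^\infty\bar F(w)\,dw=-\frac{\log\left(1-\frac{p\lambda^2}{b}\right)}{p\lambda}$.
   Context: $\int_0^\infty\bar F(w)\,dw$ is the mean workload (equivalently the mean queue length) of a server under the LL($d,p$) policy. *)

(* Defs.v *)
From Stdlib Require Import Reals.
From Coquelicot Require Import Coquelicot.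
Open Scope R_scope.

Definition is_LL_solution (d : nat) (p lam : R) (F : R -> R) : Prop :=
  (forall w, 0 < w ->
     is_derive F w (lam * (p * F w ^ d + (1 - p) * F w) - F w)) /\
  filterlim F (at_right 0) (locally (F 0)) /\
  F 0 = lam.

(* Main.v *)
Require Import Defs.
From Stdlib Require Import Reals Lra Lia Psatz.
From Coquelicot Require Import Coquelicot.
Open Scope R_scope.


Definition cwc (g : R -> R) := forall t, 0 <= t -> forall e, 0 < e ->
  exists del, 0 < del /\ forall s, 0 <= s -> Rabs (s - t) < del -> Rabs (g s - g t) < e.

Lemma deriv_neg_left g t l : is_derive g t l -> l < 0 ->
  exists del, 0 < del /\ forall s, t - del < s < t -> g t < g s.
Proof.
  intros H Hl. apply is_derive_Reals in H.
  destruct (H (-l/2)) as [del Hdel]; [lra|].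
  exists del. split; [apply cond_pos|]. intros s Hs.
  assert (Hh : s - t <> 0) by lra.
  assert (Ha : Rabs (s - t) < del) by (rewrite Rabs_left; lra).
  specialize (Hdel (s - t) Hh Ha). replace (t + (s - t)) with s in Hdel by ring.
  set (q := (g s - g t) / (s - t)) in Hdel.
  assert (Hq : g s - g t = q * (s - t)) by (unfold q; field; auto).
  apply Rabs_def2 in Hdel. nra.
Qed.

Lemma barrier (g : R -> R) (K : R) : g 0 < K -> cwc g ->
  (forall t, 0 < t -> g t = K -> exists l, l < 0 /\ is_derive g t l) ->
  forall t, 0 <= t -> g t < K.
Proof.
  intros H0 Hc Hd t1 Ht1. destruct (Rlt_or_le (g t1) K) as [h|h]; [exact h|exfalso].
  set (E := fun x => 0 <= x <= t1 /\ forall s, 0 <= s <= x -> g s < K).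
  assert (HB: bound E) by (exists t1; intros x [[_ Hx] _]; exact Hx).
  assert (HE: exists x, E x).
  { exists 0; split; [lra| intros s Hs; replace s with 0 by lra; exact H0]. }
  destruct (completeness E HB HE) as [m [Hub Hlub]].
  assert (Hm0 : 0 <= m) by (apply Hub; split; [lra| intros s Hs; replace s with 0 by lra; exact H0]).
  assert (Hm1 : m <= t1) by (apply Hlub; intros x [[_ Hx] _]; exact Hx).
  assert (Hbelow : forall s, 0 <= s < m -> g s < K).
  { intros s Hs. destruct (Rlt_or_le (g s) K) as [hs|hs]; [exact hs|exfalso].
    assert (m <= s); [|lra]. apply Hlub. intros x [Hx1 Hx2].
    destruct (Rle_or_lt x s) as [|hx]; [assumption|].
    specialize (Hx2 s ltac:(lra)). lra. }
  destruct (Rlt_or_le (g m) K) as [hm|hm].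
  - destruct (Hc m Hm0 (K - g m) ltac:(lra)) as [del [Hdel Hdel2]].
    destruct (Rle_or_lt t1 m) as [ht|ht].
    + replace m with t1 in hm by lra. lra.
    + set (x := Rmin (m + del/2) t1).
      assert (Hx : E x).
      { split. { unfold x. split; [apply Rmin_glb; lra| apply Rmin_r]. }
        intros s Hs. destruct (Rlt_or_le s m) as [hs|hs]. { apply Hbelow; lra. }
        assert (s <= m + del/2) by (pose proof (Rmin_l (m + del/2) t1); unfold x in Hs; lra).
        specialize (Hdel2 s ltac:(lra) ltac:(rewrite Rabs_right; lra)).
        apply Rabs_def2 in Hdel2. lra. }
      specialize (Hub x Hx). unfold x in Hub.
      unfold Rmin in Hub; destruct (Rle_dec (m + del/2) t1); lra.
  - assert (Hmp : 0 < m).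
    { destruct (Rle_lt_or_eq_dec 0 m Hm0) as [|e]; [assumption|]. rewrite <- e in hm. lra. }
    destruct (Rle_lt_or_eq_dec K (g m) hm) as [hgt|heq].
    + destruct (Hc m Hm0 (g m - K) ltac:(lra)) as [del [Hdel Hdel2]].
      set (s := Rmax (m - del/2) (m/2)).
      assert (Hs1 : m - del/2 <= s) by apply Rmax_l.
      assert (Hs2 : m/2 <= s) by apply Rmax_r.
      assert (Hs3 : s < m) by (unfold s; apply Rmax_lub_lt; lra).
      specialize (Hdel2 s ltac:(lra) ltac:(rewrite Rabs_left; lra)).
      apply Rabs_def2 in Hdel2. specialize (Hbelow s ltac:(lra)). lra.
    + destruct (Hd m Hmp (eq_sym heq)) as [l [Hl Hder]].
      destruct (deriv_neg_left g m l Hder Hl) as [del [Hdel Hdel2]].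
      set (s := Rmax (m - del/2) (m/2)).
      assert (Hs1 : m - del/2 <= s) by apply Rmax_l.
      assert (Hs2 : m/2 <= s) by apply Rmax_r.
      assert (Hs3 : s < m) by (unfold s; apply Rmax_lub_lt; lra).
      specialize (Hdel2 s ltac:(lra)). specialize (Hbelow s ltac:(lra)). lra.
Qed.


Lemma ballR x e y : ball x e y <-> Rabs (y - x) < e.
Proof. reflexivity. Qed.

Lemma cwc_of (F : R -> R) : (forall t, 0 < t -> ex_derive F t) ->
  filterlim F (at_right 0) (locally (F 0)) -> cwc F.
Proof.
  intros Hd Hr t Ht e He.
  destruct (Rle_lt_or_eq_dec 0 t Ht) as [Htp|Ht0].
  - pose proof (ex_derive_continuous F t (Hd t Htp)) as Hc.
    apply continuity_pt_filterlim in Hc.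
    destruct (Hc e He) as [del [Hdel H]].
    exists del. split; [lra|]. intros s _ Hs.
    destruct (Req_dec s t) as [->|hst]; [rewrite Rminus_eq_0, Rabs_R0; exact He|].
    apply (H s). split; [split; [exact I| auto]| exact Hs].
  - subst t. assert (Hb : locally (F 0) (ball (F 0) (mkposreal e He))) by apply locally_ball.
    destruct (Hr _ Hb) as [del H].
    exists del. split; [apply cond_pos|]. intros s Hs Hs2.
    destruct (Rle_lt_or_eq_dec 0 s Hs) as [hs|hs].
    + apply H; [apply ballR; exact Hs2| exact hs].
    + subst s. rewrite Rminus_eq_0, Rabs_R0. exact He.
Qed.


Lemma ode_alg (e : nat) (p lam y : R) :
  lam * (p * y ^ S (S e) + (1 - p) * y) - y = y * (lam * p * y ^ S e - (1 - (1 - p) * lam)).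
Proof. change (y ^ S (S e)) with (y * y ^ S e). ring. Qed.

Lemma key_ineq (e : nat) (p lam : R) : 0 < p <= 1 -> 0 < lam < 1 ->
  p * lam ^ S (S e) < 1 - (1 - p) * lam.
Proof.
  intros Hp Hl. pose proof (pow_lt_1_compat lam (S e) ltac:(lra) (Nat.lt_0_succ e)) as H.
  change (lam ^ S (S e)) with (lam * lam ^ S e).
  assert (0 < p * lam * (1 - lam ^ S e)) by (apply Rmult_lt_0_compat; [apply Rmult_lt_0_compat|]; lra).
  nra.
Qed.

Lemma F_bounds (e : nat) (p lam : R) (F : R -> R) :
  0 < p <= 1 -> 0 < lam < 1 -> is_LL_solution (S (S e)) p lam F ->
  forall t, 0 <= t -> 0 <= F t <= lam.
Proof.
  intros Hp Hl [Hd [Hr H0]].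
  set (b := 1 - (1 - p) * lam).
  pose proof (key_ineq e p lam Hp Hl) as Hk. fold b in Hk.
  assert (Hex : forall t, 0 < t -> ex_derive F t) by (intros t Ht; eexists; apply Hd; exact Ht).
  assert (Hc : cwc F) by (apply cwc_of; [exact Hex| exact Hr]).
  assert (Hlow : forall t, 0 <= t -> 0 <= F t).
  { intros t Ht. destruct (Rle_or_lt 0 (F t)) as [h|h]; [exact h|exfalso].
    set (eta := Rmin (- F t) (lam / 2)).
    assert (He1 : 0 < eta) by (apply Rmin_glb_lt; lra).
    assert (He2 : eta <= - F t) by apply Rmin_l.
    assert (He3 : eta <= lam/2) by apply Rmin_r.
    assert (Hb : forall t, 0 <= t -> (fun t => - F t) t < eta).
    { apply barrier.
      - rewrite H0. lra.
      - intros t0 Ht0 e0 He0. destruct (Hc t0 Ht0 e0 He0) as [del [Hdel H]].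
        exists del. split; [exact Hdel|]. intros s Hs Hs2.
        replace (- F s - - F t0) with (- (F s - F t0)) by ring. rewrite Rabs_Ropp. auto.
      - intros t0 Ht0 Heq. simpl in Heq.
        exists (- (lam * (p * F t0 ^ S (S e) + (1 - p) * F t0) - F t0)).
        split.
        + rewrite ode_alg. fold b. replace (F t0) with (- eta) by lra.
          assert (Hpw : Rabs ((- eta) ^ S e) <= lam ^ S e).
          { rewrite <- RPow_abs. apply pow_incr. split; [apply Rabs_pos|].
            rewrite Rabs_Ropp, Rabs_right; lra. }
          assert (Hpw2 : lam * p * (- eta) ^ S e <= p * lam ^ S (S e)).
          { change (lam ^ S (S e)) with (lam * lam ^ S e).
            pose proof (Rle_abs ((- eta) ^ S e)).
            replace (p * (lam * lam ^ S e)) with (lam * p * lam ^ S e) by ring.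
            apply Rmult_le_compat_l; [nra| lra]. }
          assert (lam * p * (- eta) ^ S e - b < 0) by lra.
          assert (0 < eta * - (lam * p * (- eta) ^ S e - b)) by (apply Rmult_lt_0_compat; lra).
          lra.
        + apply (is_derive_opp F t0). apply Hd. exact Ht0. }
    specialize (Hb t Ht). simpl in Hb. lra. }
  assert (Hcont : continuity_pt (fun y => lam * p * y ^ S e) lam).
  { apply continuity_pt_filterlim. apply (ex_derive_continuous (fun y => lam * p * y ^ S e)). auto_derive. exact I. }
  destruct (Hcont (b - p * lam ^ S (S e)) ltac:(lra)) as [eta0 [Heta0 Hc0]].
  assert (Hup : forall eta, 0 < eta < eta0 -> forall t, 0 <= t -> F t < lam + eta).
  { intros eta Heta. apply barrier.
    - rewrite H0. lra.
    - exact Hc.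
    - intros t0 Ht0 Heq.
      exists (lam * (p * F t0 ^ S (S e) + (1 - p) * F t0) - F t0).
      split; [|apply Hd; exact Ht0].
      rewrite ode_alg. fold b. rewrite Heq.
      assert (Hq : lam * p * (lam + eta) ^ S e < b).
      { destruct (Req_dec (lam + eta) lam) as [E|E]; [lra|].
        specialize (Hc0 (lam + eta)). simpl in Hc0.
        unfold R_dist in Hc0.
        assert (Hx : Rabs (lam * p * (lam + eta) ^ S e - lam * p * lam ^ S e) < b - p * lam ^ S (S e)).
        { apply Hc0. split. { split; [exact I| auto]. }
          replace (lam + eta - lam) with eta by ring. rewrite Rabs_right; lra. }
        apply Rabs_def2 in Hx. change (lam ^ S (S e)) with (lam * lam ^ S e) in Hx. lra. }
      assert (0 < (lam + eta) * - (lam * p * (lam + eta) ^ S e - b)) by (apply Rmult_lt_0_compat; lra).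
      lra. }
  intros t Ht. split; [apply Hlow; exact Ht|].
  destruct (Rle_or_lt (F t) lam) as [h|h]; [exact h|exfalso].
  set (eta := Rmin (F t - lam) (eta0 / 2)).
  assert (He1 : 0 < eta) by (apply Rmin_glb_lt; lra).
  assert (He2 : eta <= F t - lam) by apply Rmin_l.
  assert (He3 : eta <= eta0/2) by apply Rmin_r.
  specialize (Hup eta ltac:(lra) t Ht). lra.
Qed.


Lemma F_deriv_le (e : nat) (p lam : R) (F : R -> R) :
  0 < p <= 1 -> 0 < lam < 1 -> is_LL_solution (S (S e)) p lam F ->
  forall t, 0 < t ->
  lam * (p * F t ^ S (S e) + (1 - p) * F t) - F t <=
    - ((1 - (1 - p) * lam) - p * lam ^ S (S e)) * F t.
Proof.
  intros Hp Hl HF t Ht.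
  destruct (F_bounds e p lam F Hp Hl HF t ltac:(lra)) as [H1 H2].
  rewrite ode_alg.
  assert (lam * p * F t ^ S e <= p * lam ^ S (S e)).
  { change (lam ^ S (S e)) with (lam * lam ^ S e).
    replace (p * (lam * lam ^ S e)) with (lam * p * lam ^ S e) by ring.
    apply Rmult_le_compat_l; [nra|]. apply pow_incr. lra. }
  nra.
Qed.

Lemma F_to0 (e : nat) (p lam : R) (F : R -> R) :
  0 < p <= 1 -> 0 < lam < 1 -> is_LL_solution (S (S e)) p lam F ->
  filterlim F (Rbar_locally p_infty) (locally 0).
Proof.
  intros Hp Hl HF.
  pose proof (key_ineq e p lam Hp Hl) as Hk.
  set (c := (1 - (1 - p) * lam) - p * lam ^ S (S e)).
  assert (Hc : 0 < c) by (unfold c; lra).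
  pose proof HF as [Hd _].
  assert (Hdec : forall t, 1 < t -> F t * (1 + c * t) <= lam * (1 + c)).
  { intros t Ht.
    destruct (MVT_gen (fun w => F w * (1 + c * w)) 1 t
      (fun w => (lam * (p * F w ^ S (S e) + (1 - p) * F w) - F w) * (1 + c * w) + F w * c))
      as [xi [Hxi Heq]].
    - intros y Hy. rewrite Rmin_left in Hy by lra. rewrite Rmax_right in Hy by lra.
      apply (is_derive_mult F (fun w => 1 + c * w)). { apply Hd. lra. }
      auto_derive; [exact I| ring]. intros; apply Rmult_comm.
    - intros x Hx. unfold Rmin, Rmax in Hx. destruct (Rle_dec 1 t); [|lra].
      apply continuity_pt_filterlim. apply (ex_derive_continuous (fun w => F w * (1 + c * w))).
      apply ex_derive_mult. { eexists. apply Hd. lra. } auto_derive. exact I.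
    - unfold Rmin, Rmax in Hxi. destruct (Rle_dec 1 t); [|lra].
      pose proof (F_deriv_le e p lam F Hp Hl HF xi ltac:(lra)) as Hle. fold c in Hle.
      destruct (F_bounds e p lam F Hp Hl HF xi ltac:(lra)) as [B1 B2].
      destruct (F_bounds e p lam F Hp Hl HF 1 ltac:(lra)) as [C1 C2].
      assert (Hneg : (lam * (p * F xi ^ S (S e) + (1 - p) * F xi) - F xi) * (1 + c * xi) + F xi * c <= 0).
      { assert (0 <= 1 + c * xi) by nra. 
        assert ((lam * (p * F xi ^ S (S e) + (1 - p) * F xi) - F xi) * (1 + c * xi) <= - c * F xi * (1 + c * xi)) by nra.
        assert (0 <= c * c * xi * F xi) by (repeat apply Rmult_le_pos; lra).
        nra. }
      assert (F t * (1 + c * t) - F 1 * (1 + c * 1) <= 0) by (rewrite Heq; nra).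
      nra. }
  apply filterlim_locally. intros eps.
  exists (Rmax 1 (lam * (1 + c) / (c * eps))). intros t Ht.
  assert (Ht1 : 1 < t) by (eapply Rle_lt_trans; [apply Rmax_l| exact Ht]).
  assert (Ht2 : lam * (1 + c) / (c * eps) < t) by (eapply Rle_lt_trans; [apply Rmax_r| exact Ht]).
  pose proof (cond_pos eps) as He.
  assert (Ht3 : lam * (1 + c) < c * eps * t).
  { apply Rmult_lt_compat_l with (r := c * eps) in Ht2; [|nra].
    replace (c * eps * (lam * (1 + c) / (c * eps))) with (lam * (1 + c)) in Ht2 by (field; lra).
    lra. }
  specialize (Hdec t Ht1).
  destruct (F_bounds e p lam F Hp Hl HF t ltac:(lra)) as [B1 B2].
  apply ballR. rewrite Rminus_0_r, Rabs_right by lra.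
  apply Rmult_lt_reg_r with (1 + c * t); [nra|]. nra.
Qed.


Lemma cont_of_deriv f x l : is_derive f x l -> forall eps, 0 < eps ->
  exists a, 0 < a /\ forall y, Rabs (y - x) < a -> Rabs (f y - f x) < eps.
Proof.
  intros H eps He.
  assert (Hc : continuity_pt f x).
  { apply continuity_pt_filterlim. apply (ex_derive_continuous f). eexists; exact H. }
  destruct (Hc eps He) as [a [Ha Hy]]. exists a. split; [lra|]. intros y Hyx.
  destruct (Req_dec y x) as [->|hn]; [rewrite Rminus_eq_0, Rabs_R0; exact He|].
  apply (Hy y). split; [split; [exact I| auto]| exact Hyx].
Qed.

Lemma zero_of_small x : (forall eta, 0 < eta -> Rabs x < eta) -> x = 0.
Proof.
  intros H. destruct (Req_dec x 0) as [|hn]; [assumption|].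
  specialize (H (Rabs x) (Rabs_pos_lt x hn)). lra.
Qed.

Lemma rmax_dist x z : 0 <= z -> Rabs (Rmax 0 x - z) <= Rabs (x - z).
Proof.
  intros Hz. unfold Rmax. destruct (Rle_dec 0 x); [lra|].
  unfold Rabs; destruct (Rcase_abs (0 - z)); destruct (Rcase_abs (x - z)); lra.
Qed.

Lemma integral_psi (e : nat) (p lam : R) (F Psi : R -> R) :
  0 < p <= 1 -> 0 < lam < 1 -> is_LL_solution (S (S e)) p lam F ->
  (forall y, 0 <= y <= lam ->
     is_derive Psi y (/ ((1 - (1 - p) * lam) - lam * p * y ^ S e))) ->
  is_RInt_gen F (at_point 0) (Rbar_locally p_infty) (Psi lam - Psi 0).
Proof.
  intros Hp Hl HF HPsi.
  pose proof (key_ineq e p lam Hp Hl) as Hk.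
  set (b := 1 - (1 - p) * lam) in *.
  pose proof HF as [Hd [Hr H0]].
  assert (Hbnd := F_bounds e p lam F Hp Hl HF).
  assert (Hex : forall t, 0 < t -> ex_derive F t) by (intros t Ht; eexists; apply Hd; exact Ht).
  assert (Hc : cwc F) by (apply cwc_of; [exact Hex| exact Hr]).
  assert (HPF : forall w, 0 < w -> is_derive (fun w => Psi (F w)) w (- F w)).
  { intros w Hw. destruct (Hbnd w ltac:(lra)) as [B1 B2].
    assert (Hq : lam * p * F w ^ S e <= p * lam ^ S (S e)).
    { change (lam ^ S (S e)) with (lam * lam ^ S e).
      replace (p * (lam * lam ^ S e)) with (lam * p * lam ^ S e) by ring.
      apply Rmult_le_compat_l; [nra|]. apply pow_incr. lra. }
    pose proof (is_derive_comp Psi F w _ _ (HPsi (F w) (conj B1 B2)) (Hd w Hw)) as H.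
    rewrite ode_alg in H. fold b in H.
    replace (- F w) with (scal (F w * (lam * p * F w ^ S e - b)) (/ (b - lam * p * F w ^ S e))).
    { exact H. }
    unfold scal; simpl; unfold mult; simpl. field. change (F w * F w ^ e) with (F w ^ S e). intro; lra. }
  assert (Hexi : forall W, 0 < W -> ex_RInt F 0 W).
  { intros W HW. apply (ex_RInt_ext (V := R_NormedModule) (fun x => F (Rmax 0 x)) F).
    { intros x Hx. rewrite Rmin_left in Hx by lra. rewrite Rmax_right in Hx by lra.
      rewrite Rmax_right by lra. reflexivity. }
    apply (ex_RInt_continuous (V := R_CompleteNormedModule)). intros z Hz. rewrite Rmin_left in Hz by lra.
    rewrite Rmax_right in Hz by lra.
    apply continuity_pt_filterlim. intros eps Heps.
    destruct (Hc (Rmax 0 z) (Rmax_l _ _) eps Heps) as [del [Hdel H]].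
    exists del. split; [lra|]. intros x [_ Hx]. simpl in Hx. unfold R_dist in Hx |- *.
    simpl. apply H; [apply Rmax_l|].
    rewrite (Rmax_right 0 z) by lra.
    eapply Rle_lt_trans; [apply rmax_dist; lra| exact Hx]. }
  assert (Hint : forall eps W, 0 < eps < W -> is_RInt F eps W (Psi (F eps) - Psi (F W))).
  { intros eps W HeW.
    assert (H1 := is_RInt_derive (fun w => Psi (F w)) (fun w => - F w) eps W).
    rewrite Rmin_left, Rmax_right in H1 by lra.
    assert (H2 : is_RInt (fun w => - F w) eps W (minus (Psi (F W)) (Psi (F eps)))).
    { apply H1.
      - intros x Hx. apply HPF. lra.
      - intros x Hx. apply (ex_derive_continuous (fun w => - F w)).
        eexists. apply (is_derive_opp F). apply Hd. lra. }
    apply is_RInt_opp in H2.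
    apply (is_RInt_ext (V := R_NormedModule) (fun y => opp (- F y)) F).
    { intros x _. unfold opp; simpl. ring. }
    replace (Psi (F eps) - Psi (F W)) with (opp (minus (Psi (F W)) (Psi (F eps)))).
    { exact H2. }
    unfold opp, minus, plus; simpl. unfold opp; simpl. ring. }
  assert (Hval : forall W, 0 < W -> RInt F 0 W = Psi lam - Psi (F W)).
  { intros W HW.
    assert (Hz : RInt F 0 W - (Psi lam - Psi (F W)) = 0).
    { apply zero_of_small. intros eta Heta.
      destruct (cont_of_deriv Psi lam _ (HPsi lam ltac:(lra)) (eta / 2) ltac:(lra)) as [a [Ha Ha2]].
      destruct (Hc 0 ltac:(lra) a Ha) as [del [Hdel Hdel2]].
      set (eps := Rmin (Rmin (W / 2) (del / 2)) (eta / (2 * lam + 2))).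
      assert (He1 : eps <= W / 2) by (unfold eps; eapply Rle_trans; [apply Rmin_l| apply Rmin_l]).
      assert (He2 : eps <= del / 2) by (unfold eps; eapply Rle_trans; [apply Rmin_l| apply Rmin_r]).
      assert (He3 : eps <= eta / (2 * lam + 2)) by (unfold eps; apply Rmin_r).
      assert (He0 : 0 < eps).
      { unfold eps. repeat apply Rmin_glb_lt; try lra. apply Rdiv_lt_0_compat; lra. }
      assert (HCh := RInt_Chasles F 0 eps W
        (ex_RInt_Chasles_1 F 0 eps W ltac:(lra) (Hexi W HW))
        (ex_RInt_Chasles_2 F 0 eps W ltac:(lra) (Hexi W HW))).
      rewrite <- HCh. rewrite (is_RInt_unique F eps W _ (Hint eps W ltac:(lra))).
      unfold plus; simpl.
      assert (HR : Rabs (RInt F 0 eps) <= (eps - 0) * lam).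
      { apply abs_RInt_le_const; [lra| apply (ex_RInt_Chasles_1 F 0 eps W ltac:(lra) (Hexi W HW))|].
        intros t Ht. destruct (Hbnd t ltac:(lra)). rewrite Rabs_right; lra. }
      assert (HFe : Rabs (F eps - lam) < a).
      { rewrite <- H0. apply Hdel2; [lra|]. rewrite Rminus_0_r, Rabs_right; lra. }
      specialize (Ha2 _ HFe).
      assert (Hel : eps * lam < eta / 2).
      { assert (eps * (2 * lam + 2) <= eta).
        { apply Rmult_le_compat_r with (r := 2 * lam + 2) in He3; [|lra].
          replace (eta / (2 * lam + 2) * (2 * lam + 2)) with eta in He3 by (field; lra). lra. }
        nra. }
      replace (RInt F 0 eps + (Psi (F eps) - Psi (F W)) - (Psi lam - Psi (F W)))
        with (RInt F 0 eps + (Psi (F eps) - Psi lam)) by ring.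
      eapply Rle_lt_trans; [apply Rabs_triang|]. lra. }
    lra. }
  unfold is_RInt_gen, filterlimi, filter_le, filtermapi. intros P [eps HPe].
  destruct (cont_of_deriv Psi 0 _ (HPsi 0 ltac:(split; lra)) eps (cond_pos eps)) as [a [Ha Ha2]].
  pose proof (F_to0 e p lam F Hp Hl HF) as Hto.
  destruct (Hto _ (locally_ball 0 (mkposreal a Ha))) as [M HM].
  apply Filter_prod with (Q := fun x => x = 0) (R := fun y => Rmax M 0 < y).
  - reflexivity.
  - exists (Rmax M 0). auto.
  - intros x y -> Hy. simpl.
    assert (Hy0 : 0 < y) by (eapply Rle_lt_trans; [apply Rmax_r| exact Hy]).
    assert (HyM : M < y) by (eapply Rle_lt_trans; [apply Rmax_l| exact Hy]).
    exists (Psi lam - Psi (F y)). split.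
    + rewrite <- (Hval y Hy0). apply (RInt_correct (V := R_CompleteNormedModule)). apply Hexi. exact Hy0.
    + apply HPe. apply ballR.
      specialize (HM y HyM). apply ballR in HM. simpl in HM.
      specialize (Ha2 _ HM).
      replace (Psi lam - Psi (F y) - (Psi lam - Psi 0)) with (- (Psi (F y) - Psi 0)) by ring.
      rewrite Rabs_Ropp. exact Ha2.
Qed.


Definition coef (e : nat) (p lam : R) (n : nat) : R :=
  / (1 + INR n * INR (S e)) * (lam * p / (1 - (1 - p) * lam)) ^ n / (1 - (1 - p) * lam).

Definition PsiD (e : nat) (p lam : R) (y : R) : R := y * PSeries (coef e p lam) (y ^ S e).

Lemma coef_radius (e : nat) (p lam : R) : 0 < p <= 1 -> 0 < lam < 1 ->
  forall z, Rabs z <= lam ^ S e -> Rbar_lt (Rabs z) (CV_radius (coef e p lam)).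
Proof.
  intros Hp Hl z Hz.
  pose proof (key_ineq e p lam Hp Hl) as Hk.
  set (b := 1 - (1 - p) * lam) in *.
  assert (Hb : 0 < b) by (pose proof (pow_lt_1_compat lam (S (S e)) ltac:(lra) (Nat.lt_0_succ _)); nra).
  assert (Hlp : 0 < lam * p) by nra.
  assert (Hpl : lam * p * lam ^ S e < b) by (change (lam ^ S (S e)) with (lam * lam ^ S e) in Hk; lra).
  assert (Hlt : lam ^ S e < b / (lam * p)).
  { apply Rmult_lt_reg_l with (lam * p); [lra|]. field_simplify; lra. }
  set (r := (lam ^ S e + b / (lam * p)) / 2).
  assert (Hr1 : lam ^ S e < r) by (unfold r; lra).
  assert (Hr2 : r < b / (lam * p)) by (unfold r; lra).
  assert (Hr0 : 0 < r) by (pose proof (pow_lt_1_compat lam (S e) ltac:(lra) (Nat.lt_0_succ _)); lra).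
  set (q := lam * p * r / b).
  assert (Hq : 0 <= q < 1).
  { unfold q. split; [apply Rmult_le_pos; [nra| left; apply Rinv_0_lt_compat; lra]|].
    apply Rmult_lt_reg_r with b; [lra|]. field_simplify; [|lra].
    apply Rmult_lt_compat_l with (r := lam * p) in Hr2; [|lra].
    replace (lam * p * (b / (lam * p))) with b in Hr2 by (field; lra). lra. }
  assert (Hdisk : CV_disk (coef e p lam) r).
  { unfold CV_disk.
    apply (ex_series_le (K := R_AbsRing) (V := R_CompleteNormedModule) _ (fun n => q ^ n * / b)).
    - intros n. unfold norm; simpl. unfold abs; simpl. rewrite Rabs_Rabsolu.
      unfold coef. fold b.
      assert (Hk1 : 1 <= 1 + INR n * INR (S e)).
      { pose proof (pos_INR n). pose proof (pos_INR (S e)). nra. }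
      assert (H0 : 0 < / (1 + INR n * INR (S e)) <= 1).
      { split; [apply Rinv_0_lt_compat; lra|]. rewrite <- Rinv_1. apply Rinv_le_contravar; lra. }
      assert (Hpos : 0 <= (lam * p / b) ^ n * r ^ n).
      { apply Rmult_le_pos; apply pow_le; [apply Rmult_le_pos; [lra| left; apply Rinv_0_lt_compat; lra]| lra]. }
      rewrite Rabs_right.
      + replace (q ^ n) with ((lam * p / b) ^ n * r ^ n) by (unfold q; rewrite <- Rpow_mult_distr; f_equal; field; lra).
        replace (/ (1 + INR n * INR (S e)) * (lam * p / b) ^ n / b * r ^ n)
          with (/ (1 + INR n * INR (S e)) * ((lam * p / b) ^ n * r ^ n * / b)) by (field; lra).
        rewrite <- (Rmult_1_l ((lam * p / b) ^ n * r ^ n * / b)) at 2.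
        apply Rmult_le_compat_r; [|lra].
        apply Rmult_le_pos; [lra| left; apply Rinv_0_lt_compat; lra].
      + replace (/ (1 + INR n * INR (S e)) * (lam * p / b) ^ n / b * r ^ n)
          with (/ (1 + INR n * INR (S e)) * ((lam * p / b) ^ n * r ^ n * / b)) by (field; lra).
        apply Rle_ge. apply Rmult_le_pos; [lra|]. apply Rmult_le_pos; [lra| left; apply Rinv_0_lt_compat; lra].
    - eexists. apply (is_series_scal_r (/ b) (fun n => q ^ n)). apply is_series_geom.
      rewrite Rabs_right; lra. }
  assert (Hle : Rbar_le r (CV_radius (coef e p lam))).
  { apply (proj1 (Lub_Rbar_correct (CV_disk (coef e p lam)))). exact Hdisk. }
  eapply Rbar_lt_le_trans; [| exact Hle]. simpl. lra.
Qed.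


Lemma is_series_eq_l (a : nat -> R) (l l' : R) : is_series a l -> l = l' -> is_series a l'.
Proof. intros H <-. exact H. Qed.

Lemma coef_identity (e : nat) (p lam : R) : 0 < p <= 1 -> 0 < lam < 1 ->
  forall z, Rabs z <= lam ^ S e ->
  PSeries (coef e p lam) z + INR (S e) * z * PSeries (PS_derive (coef e p lam)) z
  = / ((1 - (1 - p) * lam) - lam * p * z).
Proof.
  intros Hp Hl z Hz.
  pose proof (key_ineq e p lam Hp Hl) as Hk.
  pose proof (coef_radius e p lam Hp Hl z Hz) as Hrad.
  set (a := coef e p lam).
  set (b := 1 - (1 - p) * lam) in *.
  assert (Hb : 0 < b) by (pose proof (pow_lt_1_compat lam (S (S e)) ltac:(lra) (Nat.lt_0_succ _)); nra).
  assert (Hlp : 0 < lam * p) by nra.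
  assert (Hpl : lam * p * lam ^ S e < b) by (change (lam ^ S (S e)) with (lam * lam ^ S e) in Hk; lra).
  assert (Hz2 : lam * p * z < b).
  { pose proof (Rle_abs z). assert (lam * p * z <= lam * p * lam ^ S e) by (apply Rmult_le_compat_l; lra). lra. }
  assert (Hz3 : - b < lam * p * z).
  { assert (- z <= lam ^ S e) by (rewrite <- Rabs_Ropp in Hz; pose proof (Rle_abs (- z)); lra).
    assert (lam * p * (- z) <= lam * p * lam ^ S e) by (apply Rmult_le_compat_l; lra). lra. }
  set (Phi := PSeries a z). set (D := PSeries (PS_derive a) z).
  assert (H1 : is_series (fun k => z ^ k * a k) Phi).
  { apply (is_series_ext (fun k => scal (pow_n z k) (a k))).
    { intros k. rewrite pow_n_pow. reflexivity. }
    apply PSeries_correct. apply CV_radius_inside. exact Hrad. }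
  assert (H2 : is_series (fun k => z ^ k * (INR (S k) * a (S k))) D).
  { apply (is_series_ext (fun k => scal (pow_n z k) (PS_derive a k))).
    { intros k. rewrite pow_n_pow. reflexivity. }
    apply PSeries_correct. apply ex_pseries_derive. exact Hrad. }
  assert (H3 : is_series (fun k => z ^ k * INR k * a k) (z * D)).
  { apply is_series_decr_1.
    eapply is_series_eq_l.
    - apply (is_series_ext (fun k => (z ^ k * (INR (S k) * a (S k))) * z)).
      { intros k. simpl. ring. }
      apply (is_series_scal_r z _ _ H2).
    - unfold scal, plus, opp; simpl; unfold mult, plus, opp; simpl. ring. }
  assert (H4 : is_series (fun k => ((lam * p / b) * z) ^ k * / b) (/ (1 - (lam * p / b) * z) * / b)).
  { apply (is_series_scal_r (/ b) (fun k => ((lam * p / b) * z) ^ k)). apply is_series_geom.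
    apply Rabs_def1.
    - apply Rmult_lt_reg_r with b; [lra|]. field_simplify; lra.
    - apply Rmult_lt_reg_r with b; [lra|]. field_simplify; lra. }
  assert (H5 : is_series (fun k => ((lam * p / b) * z) ^ k * / b) (Phi + (z * D) * INR (S e))).
  { apply (is_series_ext (fun k => z ^ k * a k + (z ^ k * INR k * a k) * INR (S e))).
    { intros k. unfold a, coef. fold b.
      assert (0 < 1 + INR k * INR (S e)) by (pose proof (pos_INR k); pose proof (pos_INR (S e)); nra).
      set (s := INR (S e)) in *. set (t := INR k) in *.
      rewrite Rpow_mult_distr.
      change (@eq R (z ^ k * (/ (1 + t * s) * (lam * p / b) ^ k / b) + z ^ k * t * (/ (1 + t * s) * (lam * p / b) ^ k / b) * s) ((lam * p / b) ^ k * z ^ k * / b)). field. split; lra. }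
    apply (is_series_plus (K := R_AbsRing) (V := R_NormedModule)); [exact H1|].
    apply (is_series_scal_r (INR (S e))). exact H3. }
  apply is_series_unique in H4. apply is_series_unique in H5.
  rewrite H4 in H5.
  replace (Phi + INR (S e) * z * D) with (Phi + (z * D) * INR (S e)) by ring.
  rewrite <- H5. field. split; intro; lra.
Qed.

Lemma PsiD_deriv (e : nat) (p lam : R) : 0 < p <= 1 -> 0 < lam < 1 ->
  forall y, 0 <= y <= lam ->
  is_derive (PsiD e p lam) y (/ ((1 - (1 - p) * lam) - lam * p * y ^ S e)).
Proof.
  intros Hp Hl y Hy.
  assert (Hz : Rabs (y ^ S e) <= lam ^ S e).
  { rewrite Rabs_right; [apply pow_incr; lra| apply Rle_ge, pow_le; lra]. }
  pose proof (coef_radius e p lam Hp Hl _ Hz) as Hrad.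
  pose proof (coef_identity e p lam Hp Hl _ Hz) as Hid.
  unfold PsiD.
  assert (Hc : is_derive (fun y => PSeries (coef e p lam) (y ^ S e)) y
            (scal (INR (S e) * 1 * y ^ e) (PSeries (PS_derive (coef e p lam)) (y ^ S e)))).
  { apply (is_derive_comp (PSeries (coef e p lam)) (fun y => y ^ S e)).
    - apply is_derive_PSeries. exact Hrad.
    - apply (is_derive_pow (fun t => t) (S e) y 1). apply (is_derive_id (K := R_AbsRing)). }
  pose proof (Derive.is_derive_mult (fun t => t) _ y 1 _ (is_derive_id (K := R_AbsRing) y) Hc) as Hm.
  rewrite <- Hid. 
  replace (PSeries (coef e p lam) (y ^ S e) + INR (S e) * y ^ S e * PSeries (PS_derive (coef e p lam)) (y ^ S e))
    with (1 * PSeries (coef e p lam) (y ^ S e) + y * scal (INR (S e) * 1 * y ^ e) (PSeries (PS_derive (coef e p lam)) (y ^ S e))).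
  { exact Hm. }
  unfold scal; simpl; unfold mult; simpl. ring.
Qed.


Lemma is_RInt_gen_eq_l (f : R -> R) Fa Fb (l l' : R) :
  is_RInt_gen f Fa Fb l -> l = l' -> is_RInt_gen f Fa Fb l'.
Proof. intros H <-. exact H. Qed.

Lemma Psi2_deriv (p lam : R) : 0 < p <= 1 -> 0 < lam < 1 ->
  forall y, 0 <= y <= lam ->
  is_derive (fun y => - ln (1 - lam * p * y / (1 - (1 - p) * lam)) / (p * lam)) y
    (/ ((1 - (1 - p) * lam) - lam * p * y ^ 1)).
Proof.
  intros Hp Hl y Hy.
  pose proof (key_ineq 0 p lam Hp Hl) as Hk. simpl in Hk.
  set (b := 1 - (1 - p) * lam) in *.
  assert (0 <= p * (lam * (lam * 1))) by (apply Rmult_le_pos; [lra| nra]).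
  assert (Hb : 0 < b) by lra.
  assert (Hy2 : lam * p * y <= p * (lam * (lam * 1))).
  { replace (p * (lam * (lam * 1))) with (lam * p * lam) by ring.
    apply Rmult_le_compat_l; [nra| lra]. }
  auto_derive.
  - assert (lam * p * y * / b < 1); [|lra].
    apply Rmult_lt_reg_r with b; [lra|]. rewrite Rmult_assoc, Rinv_l by lra. lra.
  - assert (Hne : b - lam * p * y <> 0) by (intro; lra).
    assert (Hne2 : 1 + - (lam * p * y * / b) <> 0).
    { intro Hh. apply Hne. replace (b - lam * p * y) with (b * (1 + - (lam * p * y * / b))) by (field; lra).
      rewrite Hh. ring. }
    rewrite pow_1. field. repeat split; try (intro; nra); auto.
Qed.


Theorem proposition4p7 (d : nat) (p lam : R) (F : R -> R) :
  (2 <= d)%nat -> 0 < p <= 1 -> 0 < lam < 1 ->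
  is_LL_solution d p lam F ->
  let b := 1 - (1 - p) * lam in
  (exists S : R,
     is_series (fun n : nat =>
        / (1 + INR n * (INR d - 1)) * (p * lam ^ d / b) ^ n) S /\
     is_RInt_gen F (at_point 0) (Rbar_locally p_infty) (lam / b * S)) /\
  (d = 2%nat ->
     is_RInt_gen F (at_point 0) (Rbar_locally p_infty)
       (- ln (1 - p * lam ^ 2 / b) / (p * lam))).
Proof.
  intros Hd Hp Hl HF b.
  destruct d as [|[|e]]; [lia| lia|].
  pose proof (key_ineq e p lam Hp Hl) as Hk. fold b in Hk.
  assert (Hb : 0 < b).
  { assert (0 <= p * lam ^ S (S e)) by (apply Rmult_le_pos; [lra| apply pow_le; lra]). lra. }
  split.
  - set (z := lam ^ S e).
    assert (Hz : Rabs z <= lam ^ S e) by (unfold z; rewrite Rabs_right; [lra| apply Rle_ge, pow_le; lra]).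
    pose proof (coef_radius e p lam Hp Hl z Hz) as Hrad.
    set (Phi := PSeries (coef e p lam) z).
    assert (H1 : is_series (fun k => z ^ k * coef e p lam k) Phi).
    { apply (is_series_ext (fun k => scal (pow_n z k) (coef e p lam k))).
      { intros k. rewrite pow_n_pow. reflexivity. }
      apply PSeries_correct. apply CV_radius_inside. exact Hrad. }
    exists (Phi * b). split.
    + apply (is_series_ext (fun k => z ^ k * coef e p lam k * b)).
      2: { apply (is_series_scal_r b _ _ H1). }
      intros k. unfold coef. fold b.
      rewrite (S_INR (S e)). replace (INR (S e) + 1 - 1) with (INR (S e)) by ring.
      assert (0 < 1 + INR k * INR (S e)) by (pose proof (pos_INR k); pose proof (pos_INR (S e)); nra).
      unfold z. change (lam ^ S (S e)) with (lam * lam ^ S e).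
      replace (p * (lam * lam ^ S e) / b) with (lam * p / b * lam ^ S e) by (field; lra).
      rewrite Rpow_mult_distr. match goal with |- ?x = ?y => change (@eq R x y) end. field. lra.
    + eapply is_RInt_gen_eq_l.
      { apply (integral_psi e p lam F (PsiD e p lam) Hp Hl HF). apply PsiD_deriv; assumption. }
      unfold PsiD. fold z. fold Phi. field. lra.
  - intros Hd2. injection Hd2 as He. subst e.
    eapply is_RInt_gen_eq_l.
    { apply (integral_psi 0 p lam F (fun y => - ln (1 - lam * p * y / (1 - (1 - p) * lam)) / (p * lam)) Hp Hl HF). apply Psi2_deriv; assumption. }
    fold b. replace (lam * p * 0 / b) with 0 by (field; lra).
    rewrite Rminus_0_r, ln_1.
    replace (lam * p * lam / b) with (p * lam ^ 2 / b) by (simpl; field; lra).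
    field. split; lra.
Qed.
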